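(* $\mathcal L(RTG)\subsetneq\mathcal L(TG)$: every language generated by a regional tile grammar is generated by a tile grammar, and some language generated by a tile grammar is generated by no regional tile grammar.
   Context: Pictures: for a finite alphabet $\Sigma$, a picture over $\Sigma$ is a nonempty rectangular array of elements of $\Sigma$; $\Sigma^{++}$ is the set of all of them. For $\#\notin\Sigma$, $\hat p$ is $p$ surrounded by a one-pixel frame of $\#$'s. A tile is a $2\times2$ picture; $\llbracket q\rrbracket$ is the set of tiles occurring as subpictures (on consecutive rows and columns) of $q$. For a finite tile set $\theta$ over $\Gamma\cup\{\#\}$, $LOC(\theta)=\{p\in\Gamma^{++}:\llbracket\hat p\rrbracket\subseteq\theta\}$. Subdomains, partitions: a subdomain $(x,y;x',y')$ of $p$ is the rectangle of positions $\{x,\dots,x'\}\times\{y,\dots,y'\}$, $\mathrm{spic}(p,d)$ its subpicture, $d\oplus(a,b)$ its translate; $d$ is $C$-homogeneous (label $C$) if all its pixels equal $C$; subdomains are adjacent if they share a horizontal or vertical boundary segment of positive length. A homogeneous partition of $p$ is a partition of its positions into homogeneous subdomains; strong if adjacent subdomains have distinct labels (then unique, written $\Pi(p)$); regional if distinct subdomains have distinct labels; $\mathrm{unit}(p)$ is the partition into single pixels. A language is regional if each of its pictures admits a regional homogeneous partition. Tile grammars: a TG is $G=(\Sigma,N,S,R)$, $\Sigma,N$ disjoint finite alphabets, $S\in N$, finite rule set $R$ with fixed size rules $A\to t$ ($t\in\Sigma$) and variable size rules $A\to\omega$ ($\omega$ a finite tile set over $N\cup\{\#\}$ with no concave tile,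 i.e. no tile with rows $(B,B)$ over $(C,B)$ or a rotation of it, $B\ne\#$, $C\ne B$). $(p,\pi)\Rightarrow_G(p',\pi')$ iff for some $A$-homogeneous $d=(x,y;x',y')\in\pi$ and a rule with left side $A$, $p'$ is $p$ with $\mathrm{spic}(p,d)$ replaced by $t$ (rule $A\to t$, $d$ a single pixel) or by some $s\in LOC(\omega)$ of the size of $d$, and $\pi'=(\pi\setminus\{d\})\cup(\Pi(s)\oplus(x-1,y-1))$. $L(G)=\{p\in\Sigma^{++}:(S^{|p|},\{\text{positions of }p\})\Rightarrow_G^*(p,\mathrm{unit}(p))\}$, $S^{|p|}$ the $S$-homogeneous picture of the size of $p$. A regional tile grammar (RTG) is a TG in which $LOC(\omega)$ is regional for every variable size rule $A\to\omega$. $\mathcal L(TG)$, $\mathcal L(RTG)$ denote the classes of languages generated by TGs, resp. RTGs. *)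

(* Defs.v *)
From HB Require Import structures.
From mathcomp Require Import all_boot all_order.
From mathcomp Require Import ssralg matrix.
Set Implicit Arguments. Unset Strict Implicit. Unset Printing Implicit Defensive.

(* A picture of size m x n over T is a matrix 'M[T]_(m,n) (nonemptiness: 0<m, 0<n
   is imposed where pictures are used). Indices are 0-based: row i, column j. *)

Definition pget (T : Type) (m n : nat) (M : 'M[T]_(m, n)) (i j : nat) : option T :=
  match (insub i : option 'I_m), (insub j : option 'I_n) with
  | Some i', Some j' => Some (M i' j')
  | _, _ => None
  end.

(* the framed picture \hat s : positions 0..h+1 x 0..w+1, None plays the role of # *)
Definition framed (T : Type) (h w : nat) (s : 'M[T]_(h, w)) (i j : nat) : option T :=
  if (i == 0) || (j == 0) then None else pget s i.-1 j.-1.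

Definition tile_at (T : Type) (h w : nat) (s : 'M[T]_(h, w)) (i j : nat) : 'M[option T]_2 :=
  \matrix_(a < 2, b < 2) framed s (i + a) (j + b).

Definition LOC (N : finType) (om : {set 'M[option N]_2}) (h w : nat) (s : 'M[N]_(h, w)) : Prop :=
  0 < h /\ 0 < w /\ forall i j, i <= h -> j <= w -> tile_at s i j \in om.

Definition concave (N : finType) (t : 'M[option N]_2) : bool :=
  [exists b : N, exists k : 'I_2 * 'I_2,
     (t k.1 k.2 != Some b) &&
     [forall k' : 'I_2 * 'I_2, (k' != k) ==> (t k'.1 k'.2 == Some b)]].

(* subdomain (r1,c1;r2,c2): rows r1..r2, columns c1..c2 (0-based, inclusive) *)
Record rect := Rect { r1 : nat; c1 : nat; r2 : nat; c2 : nat }.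

Definition in_rect (x : rect) (i j : nat) : bool :=
  (r1 x <= i <= r2 x) && (c1 x <= j <= c2 x).

Definition valid_in (h w : nat) (x : rect) : bool :=
  [&& r1 x <= r2 x, c1 x <= c2 x, r2 x < h & c2 x < w].

(* d ⊕ (a,b) with offset given by the top-left corner of d *)
Definition shift (d y : rect) : rect :=
  Rect (r1 d + r1 y) (c1 d + c1 y) (r1 d + r2 y) (c1 d + c2 y).

(* adjacency: sharing a horizontal or vertical boundary segment of positive length *)
Definition adjacent (x y : rect) : bool :=
  ((r2 x).+1 == r1 y) && (maxn (c1 x) (c1 y) <= minn (c2 x) (c2 y)) ||
  ((r2 y).+1 == r1 x) && (maxn (c1 x) (c1 y) <= minn (c2 x) (c2 y)) ||
  ((c2 x).+1 == c1 y) && (maxn (r1 x) (r1 y) <= minn (r2 x) (r2 y)) ||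
  ((c2 y).+1 == c1 x) && (maxn (r1 x) (r1 y) <= minn (r2 x) (r2 y)).

Definition label (T : Type) (h w : nat) (s : 'M[T]_(h, w)) (x : rect) : option T :=
  pget s (r1 x) (c1 x).

Definition hpartition (T : Type) (h w : nat) (s : 'M[T]_(h, w)) (P : rect -> Prop) : Prop :=
  (forall x, P x -> valid_in h w x) /\
  (forall i j, i < h -> j < w -> exists! x, P x /\ in_rect x i j) /\
  (forall x, P x -> forall i j, in_rect x i j -> pget s i j = label s x).

Definition strong_hpartition (T : Type) (h w : nat) (s : 'M[T]_(h, w)) (P : rect -> Prop) : Prop :=
  hpartition s P /\
  forall x y, P x -> P y -> x <> y -> adjacent x y -> label s x <> label s y.

Definition regional_hpartition (T : Type) (h w : nat) (s : 'M[T]_(h, w)) (P : rect -> Prop) : Prop :=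
  hpartition s P /\
  forall x y, P x -> P y -> x <> y -> label s x <> label s y.

(* a tile grammar: terminals Sig, nonterminals N (disjoint by construction),
   fixed size rules A -> t, variable size rules A -> omega *)
Record TG (Sig N : finType) := MkTG {
  tg_start : N;
  tg_fixed : {set N * Sig};
  tg_var : {set N * {set 'M[option N]_2}} }.

Definition is_TG (Sig N : finType) (G : TG Sig N) : Prop :=
  forall A om, (A, om) \in tg_var G -> forall t, t \in om -> ~~ concave t.

Definition is_RTG (Sig N : finType) (G : TG Sig N) : Prop :=
  is_TG G /\
  forall A om, (A, om) \in tg_var G ->
    forall h w (s : 'M[N]_(h, w)), LOC om s -> exists P, regional_hpartition s P.

Definition homog (T : Type) (m n : nat) (p : 'M[T]_(m, n)) (d : rect) (v : T) : Prop :=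
  forall i j, in_rect d i j -> pget p i j = Some v.

Inductive step (Sig N : finType) (G : TG Sig N) (m n : nat) :
  'M[Sig + N]_(m, n) -> (rect -> Prop) -> 'M[Sig + N]_(m, n) -> (rect -> Prop) -> Prop :=
| step_fixed (p : 'M[Sig + N]_(m, n)) (pi : rect -> Prop) (p' : 'M[Sig + N]_(m, n)) (pi' : rect -> Prop) (d : rect) (A : N) (t : Sig) :
    pi d -> r1 d = r2 d -> c1 d = c2 d -> valid_in m n d ->
    homog p d (inr A) -> (A, t) \in tg_fixed G ->
    (forall (i : 'I_m) (j : 'I_n), p' i j = if in_rect d i j then inl t else p i j) ->
    (forall x, pi' x <-> pi x) ->
    step G p pi p' pi'
| step_var (p : 'M[Sig + N]_(m, n)) (pi : rect -> Prop) (p' : 'M[Sig + N]_(m, n)) (pi' : rect -> Prop) (d : rect) (A : N) (om : {set 'M[option N]_2})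
    (s : 'M[N]_((r2 d - r1 d).+1, (c2 d - c1 d).+1)) (P : rect -> Prop) :
    pi d -> valid_in m n d ->
    homog p d (inr A) -> (A, om) \in tg_var G ->
    LOC om s -> strong_hpartition s P ->
    (forall (i : 'I_m) (j : 'I_n),
        if in_rect d i j then Some (p' i j) = omap inr (pget s (i - r1 d) (j - c1 d))
        else p' i j = p i j) ->
    (forall x, pi' x <-> ((pi x /\ x <> d) \/ exists y, P y /\ x = shift d y)) ->
    step G p pi p' pi'.

Inductive derives (Sig N : finType) (G : TG Sig N) (m n : nat) :
  'M[Sig + N]_(m, n) -> (rect -> Prop) -> 'M[Sig + N]_(m, n) -> (rect -> Prop) -> Prop :=
| derives_refl p pi : derives G p pi p pi
| derives_step p pi p1 pi1 p2 pi2 :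
    step G p pi p1 pi1 -> derives G p1 pi1 p2 pi2 -> derives G p pi p2 pi2.

Definition TGlang (Sig N : finType) (G : TG Sig N) (m n : nat) (p : 'M[Sig]_(m, n)) : Prop :=
  0 < m /\ 0 < n /\
  exists pi0 pif : rect -> Prop,
    (forall x, pi0 x <-> x = Rect 0 0 m.-1 n.-1) /\
    (forall x, pif x <-> exists i j, [/\ i < m, j < n & x = Rect i j i j]) /\
    derives G (const_mx (inr (tg_start G))) pi0 (map_mx inl p) pif.

Definition same_lang (Sig N N' : finType) (G : TG Sig N) (G' : TG Sig N') : Prop :=
  forall m n (p : 'M[Sig]_(m, n)), TGlang G p <-> TGlang G' p.

(* Main.v *)
Require Import Defs.
From mathcomp Require Import all_boot all_order.
From mathcomp Require Import ssralg matrix.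
From Stdlib Require Import Classical ClassicalEpsilon Lia List.
Set Implicit Arguments. Unset Strict Implicit. Unset Printing Implicit Defensive.

Lemma pgetE (T : Type) m n (M : 'M[T]_(m, n)) i j (Hi : i < m) (Hj : j < n) :
  pget M i j = Some (M (Ordinal Hi) (Ordinal Hj)).
Proof.
rewrite /pget insubT insubT /=. by [].
Qed.

Lemma pget_out (T : Type) m n (M : 'M[T]_(m, n)) i j :
  ~~ ((i < m) && (j < n)) -> pget M i j = None.
Proof.
rewrite /pget negb_and => /orP [Hi|Hj].
  by rewrite insubF //; apply/negbTE.
case: insubP => [x _ _|_] //; by rewrite insubF //; apply/negbTE.
Qed.

Lemma pget_some (T : Type) m n (M : 'M[T]_(m, n)) i j v :
  pget M i j = Some v -> (i < m) && (j < n).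
Proof.
case H: ((i < m) && (j < n)) => //.
by rewrite pget_out ?H.
Qed.

Lemma pget_ord (T : Type) m n (M : 'M[T]_(m, n)) (i : 'I_m) (j : 'I_n) :
  pget M i j = Some (M i j).
Proof.
rewrite (pgetE M (ltn_ord i) (ltn_ord j)). by do 2 f_equal; apply: val_inj.
Qed.

Ltac to_lia := unfold in_rect, valid_in, shift in *; simpl in *; repeat match goal with
 | H : is_true (_ && _) |- _ => let a := fresh "H" in let b := fresh "H" in destruct (andP H) as [a b]; clear H
 | H : is_true (leq _ _) |- _ => apply (elimT leP) in H
 | H : is_true (_ == _ :> nat) |- _ => apply (elimT eqP) in H
 | |- is_true (_ && _) => apply/andP; split
 | |- is_true (leq _ _) => apply/leP
 | |- ?b = true => change (is_true b)
 | |- is_true (_ == _ :> nat) => apply/eqP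
 end; unfold addn, subn, muln in *.

Definition part m n (pi : rect -> Prop) :=
  (forall x, pi x -> valid_in m n x) /\
  (forall i j, i < m -> j < n -> exists! x, pi x /\ in_rect x i j).

Lemma in_rect_valid m n x i j : valid_in m n x -> in_rect x i j -> (i < m) && (j < n).
Proof. move=> H1 H2. to_lia; lia. Qed.

Lemma part_disj m n pi x y i j : part m n pi -> pi x -> pi y ->
  in_rect x i j -> in_rect y i j -> x = y.
Proof.
move=> [Hv Hc] Px Py Ix Iy.
have /andP [Hi Hj] := in_rect_valid (Hv _ Px) Ix.
have [z [_ U]] := Hc i j Hi Hj.
by rewrite -(U x (conj Px Ix)) -(U y (conj Py Iy)).
Qed.

Lemma rect_eq x y : r1 x <= r2 x -> c1 x <= c2 x -> r1 y <= r2 y -> c1 y <= c2 y ->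
  (forall i j, in_rect x i j = in_rect y i j) -> x = y.
Proof.
move=> h1 h2 h3 h4 E.
have i1 : in_rect y (r1 x) (c1 x) by rewrite -E; to_lia; lia.
have i2 : in_rect y (r2 x) (c2 x) by rewrite -E; to_lia; lia.
have i3 : in_rect x (r1 y) (c1 y) by rewrite E; to_lia; lia.
have i4 : in_rect x (r2 y) (c2 y) by rewrite E; to_lia; lia.
clear E; case: x h1 h2 i1 i2 i3 i4 => a b c d; case: y h3 h4 => a' b' c' d' /= *.
to_lia; f_equal; lia.
Qed.

Lemma in_rect_shift d y i j : in_rect (shift d y) i j =
  [&& r1 d <= i, c1 d <= j & in_rect y (i - r1 d) (j - c1 d)].
Proof.
apply/idP/idP => H; to_lia; lia.
Qed.

Section TreeSem.
Variables (Sig N : finType) (G : TG Sig N).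

Definition subf (g : nat -> nat -> option (Sig + N)) (y : rect) :=
  fun i j => g (r1 y + i) (c1 y + j).

Inductive T : N -> nat -> nat -> (nat -> nat -> option (Sig + N)) -> Prop :=
| Tfix X h w g t : h = 1 -> w = 1 -> (X, t) \in tg_fixed G -> g 0 0 = Some (inl t) -> T X h w g
| Tvar X h w g om (s : 'M[N]_(h, w)) (P : rect -> Prop) :
    (X, om) \in tg_var G -> LOC om s -> strong_hpartition s P ->
    (forall y Y, P y -> label s y = Some Y ->
       T Y (r2 y - r1 y).+1 (c2 y - c1 y).+1 (subf g y)) ->
    T X h w g.

Lemma T_ext X h w g g' : T X h w g ->
  (forall i j, i < h -> j < w -> g i j = g' i j) -> T X h w g'.
Proof.
move=> HT; elim: HT g' => {X h w g}.
  move=> X h w g t -> -> Hf Hg g' E. apply: Tfix Hf _ => //. by rewrite -E.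
move=> X h w g om s P Hv Hl Hs Hc IH g' E.
apply: (Tvar Hv Hl Hs) => y Y Py Ly. apply: IH => // i j Hi Hj.
rewrite /subf; apply: E.
  have := (proj1 (proj1 Hs)) y Py; rewrite /valid_in => /and4P [? ? ? ?]. 
  move: Hi; rewrite ltnS => Hi.
  apply: leq_ltn_trans (_ : r2 y < h) => //.
  by rewrite -(subnKC (_ : r1 y <= r2 y)) // leq_add2l.
have := (proj1 (proj1 Hs)) y Py; rewrite /valid_in => /and4P [? ? ? ?].
move: Hj; rewrite ltnS => Hj.
apply: leq_ltn_trans (_ : c2 y < w) => //.
by rewrite -(subnKC (_ : c1 y <= c2 y)) // leq_add2l.
Qed.

Lemma step_part m n (p : 'M[Sig + N]_(m, n)) pi p' pi' :
  step G p pi p' pi' -> part m n pi -> part m n pi'.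
Proof.
case=> {p pi p' pi'}.
  move=> p pi p' pi' d A t _ _ _ _ _ _ _ E [Hv Hc]; split.
    by move=> x /E; apply: Hv.
  move=> i j Hi Hj; have [x [[Px Ix] U]] := Hc i j Hi Hj.
  exists x; split; first by split => //; apply/E.
  by move=> x' [/E Px' Ix']; apply: U.
move=> p pi p' pi' d A om s P Pd Vd _ _ _ [[Vy [Cy _]] _] _ E [Hv Hc]; split.
  move=> x /E [[Px _]|[y [Py ->]]]; first by apply: Hv.
  have := Vy y Py; move: Vd; clear; move=> H1 H2. to_lia; lia.
move=> i j Hi Hj.
case: (boolP (in_rect d i j)) => Id.
  have [y [[Py Iy] U]] : exists! y, P y /\ in_rect y (i - r1 d) (j - c1 d).
    apply: Cy; move: Id Vd; clear; move=> H1 H2; to_lia; lia.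
  exists (shift d y); split.
    split; first by apply/E; right; exists y.
    rewrite in_rect_shift Iy andbT; move: Id; clear => H; to_lia; lia.
  move=> x' [/E [[Px' Nx']|[y' [Py' ->]]] Ix'].
    by case: Nx'; apply: (part_disj (conj Hv Hc) Px' Pd Ix' Id).
  rewrite (U y') //; split => //.
  by move: Ix'; rewrite in_rect_shift => /and3P [].
have [x [[Px Ix] U]] := Hc i j Hi Hj.
have Nx : x <> d by move=> Ex; move: Id; rewrite -Ex Ix.
exists x; split; first by split => //; apply/E; left.
move=> x' [/E [[Px' _]|[y' [Py' ->]]] Ix']; first by apply: U.
exfalso; move: Ix'; rewrite in_rect_shift => /and3P [h1 h2 h3].
have := Vy y' Py'; move: Id h1 h2 h3 Vd; clear; move=> Id h1 h2 h3 Vd Vy.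
move/negP: Id; apply; to_lia; lia.
Qed.

End TreeSem.


Section Sound.
Variables (Sig N : finType) (G : TG Sig N).

Lemma pget_eq_gen (T0 : Type) m n (p p' : 'M[T0]_(m, n)) i j :
  (forall (i' : 'I_m) (j' : 'I_n), val i' = i -> val j' = j -> p' i' j' = p i' j') ->
  pget p' i j = pget p i j.
Proof.
move=> H; case Hij: ((i < m) && (j < n)).
  move/andP: Hij => [Hi Hj]; rewrite !(pgetE _ Hi Hj) H //.
by rewrite !pget_out ?Hij.
Qed.

Lemma corner_in x : r1 x <= r2 x -> c1 x <= c2 x -> in_rect x (r1 x) (c1 x).
Proof. move=> h1 h2; to_lia; lia. Qed.

Lemma step_out m n (p : 'M[Sig + N]_(m, n)) pi p' pi' :
  step G p pi p' pi' -> exists d A, [/\ pi d, valid_in m n d, homog p d (inr A),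
    (forall i j, ~~ in_rect d i j -> pget p' i j = pget p i j) &
    (forall x, pi x -> x <> d -> pi' x)].
Proof.
case=> {p pi p' pi'}.
  move=> p pi p' pi' d A t Pd _ _ Vd Hd _ E EP; exists d, A; split => //.
    move=> i j Ni; apply: pget_eq_gen => i' j' Ei Ej; subst i j; by rewrite E (negbTE Ni).
  by move=> x Px _; apply/EP.
move=> p pi p' pi' d A om s P Pd Vd Hd _ _ _ E EP; exists d, A; split => //.
  move=> i j Ni; apply: pget_eq_gen => i' j' Ei Ej; subst i j; move: (E i' j'); by rewrite (negbTE Ni).
by move=> x Px Nx; apply/EP; left.
Qed.

Lemma preserve m n (p : 'M[Sig + N]_(m, n)) pi p2 pi2 :
  derives G p pi p2 pi2 -> part m n pi -> forall x, pi x -> ~ (exists X, homog p x (inr X)) ->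
  forall i j, in_rect x i j -> pget p2 i j = pget p i j.
Proof.
elim=> {p pi p2 pi2} // p pi p1 pi1 p2 pi2 Hs _ IH Hp x Px Nh i j Ix.
have [d [A [Pd Vd Hd Eo Ep]]] := step_out Hs.
have Nxd : x <> d by move=> E; apply: Nh; exists A; rewrite E.
have Eq : forall i j, in_rect x i j -> pget p1 i j = pget p i j.
  move=> i' j' I'; apply: Eo; apply/negP => Id; apply: Nxd.
  exact: (part_disj Hp Px Pd I' Id).
rewrite -Eq // (IH (step_part Hs Hp) x) //; first exact: Ep.
move=> [X HX]; apply: Nh; exists X => i' j' I'; by rewrite -Eq // HX.
Qed.

Lemma homog_eq m n (p : 'M[Sig + N]_(m, n)) x X A : r1 x <= r2 x -> c1 x <= c2 x ->
  homog p x (inr X) -> homog p x (inr A) -> X = A.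
Proof.
move=> h1 h2 H1 H2; have := corner_in h1 h2.
move=> I; move: (H1 _ _ I); rewrite (H2 _ _ I); by case=> ->.
Qed.

Lemma sound m n (p : 'M[Sig + N]_(m, n)) pi p2 pi2 :
  derives G p pi p2 pi2 -> part m n pi ->
  (forall i j, i < m -> j < n -> exists a, pget p2 i j = Some (inl a)) ->
  forall x X, pi x -> homog p x (inr X) ->
    T G X (r2 x - r1 x).+1 (c2 x - c1 x).+1 (subf (pget p2) x).
Proof.
elim=> {p pi p2 pi2}.
  move=> p pi Hp Hf x X Px Hx.
  have := (proj1 Hp) x Px => Vx.
  have Vx' := Vx; move: Vx' => /and4P [h1 h2 h3 h4].
  have I := corner_in h1 h2.
  have [a Ha] : exists a, pget p (r1 x) (c1 x) = Some (inl a).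
    apply: Hf; [exact: (leq_ltn_trans h1 h3)|exact: (leq_ltn_trans h2 h4)].
  by move: (Hx _ _ I); rewrite Ha.
move=> p pi p1 pi1 p2 pi2 Hs Hd IH Hp Hf x X Px Hx.
have Hp1 := step_part Hs Hp.
have IH' := IH Hp1 Hf.
move: Hs Hd IH IH' Hp1 Hp Hx Px; case=> {p pi p1 pi1}.
  move=> p pi p1 pi1 d A t Pd E1 E2 Vd Hdh Ht E EP Hd IH IH' Hp1 Hp Hx Px.
  case: (classic (x = d)) => [Exd|Nxd].
    subst x; move: (Vd) => /and4P [h1 h2 h3 h4].
    have EXA := homog_eq h1 h2 Hx Hdh; subst A.
    apply: (Tfix (t := t)) => //; rewrite ?E1 ?E2 ?subnn //.
    rewrite /subf !addn0.
    have Hi : r1 d < m by rewrite E1.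
    have Hj : c1 d < n by rewrite E2.
    have Hp1d : pget p1 (r1 d) (c1 d) = Some (inl t).
      rewrite (pgetE _ Hi Hj) E /= ifT //; to_lia; lia.
    rewrite (preserve Hd Hp1 (x := d)) //; first by apply/EP.
      move=> [Y HY]; have := HY (r1 d) (c1 d); rewrite Hp1d.
      by move=> H; have := H (corner_in h1 h2).
    exact: corner_in.
  apply: IH'; first by apply/EP.
  move=> i j I; rewrite -(Hx _ _ I); apply: pget_eq_gen => i' j' Ei Ej; subst i j.
  rewrite E ifF //; apply/negP => Id; apply: Nxd.
  exact: (part_disj Hp Px Pd I Id).
move=> p pi p1 pi1 d A om s P Pd Vd Hdh Hv Hl Hs' E EP Hd IH IH' Hp1 Hp Hx Px.
case: (classic (x = d)) => [Exd|Nxd]; last first.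
  apply: IH'; first by apply/EP; left.
  move=> i j I; rewrite -(Hx _ _ I); apply: pget_eq_gen => i' j' Ei Ej; subst i j.
  move: (E i' j'); rewrite ifF //; apply/negP => Id; apply: Nxd.
  exact: (part_disj Hp Px Pd I Id).
subst x; move: (Vd) => /and4P [h1 h2 h3 h4].
have EXA := homog_eq h1 h2 Hx Hdh; subst A.
apply: (Tvar Hv Hl Hs') => y Y Py Ly.
have Sy : pi1 (shift d y) by apply/EP; right; exists y.
have Vy := (proj1 (proj1 Hs')) y Py.
have Hy : homog p1 (shift d y) (inr Y).
  move=> i j; rewrite in_rect_shift => /and3P [a b c].
  have Id : in_rect d i j by move: Vy c a b; clear -h1 h2; move=> Vy c a b; to_lia; lia.
  have Hi : i < m by move: Id h3; clear; move=> Id h3; to_lia; lia.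
  have Hj : j < n by move: Id h4; clear; move=> Id h4; to_lia; lia.
  rewrite (pgetE _ Hi Hj); move: (E (Ordinal Hi) (Ordinal Hj)); rewrite /= ifT //.
  rewrite ((proj2 (proj2 (proj1 Hs'))) y Py _ _ c) Ly /=. by case=> ->.
have := IH' _ _ Sy Hy; rewrite /= !subnDl => HT.
apply: (T_ext HT) => i j _ _; by rewrite /subf /= !addnA.
Qed.

End Sound.


Lemma filter_ex (E : list rect) (Q : rect -> Prop) :
  exists l, forall y, List.In y l <-> List.In y E /\ Q y.
Proof.
elim: E => [|a E [l Hl]]; first by exists nil => y; split => // -[].
case: (classic (Q a)) => Qa.
  exists (a :: l) => y /=; rewrite Hl; split.
    by case=> [<-|[]]; [split; [left|]|split; [right|]].
  by case=> [[<-|I] Qy]; [left|right].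
exists l => y /=; rewrite Hl; split.
  by case=> I Qy; split; [right|].
by case=> [[<-|I] Qy] //; split.
Qed.

Definition all_rects B : list rect :=
  flat_map (fun a => flat_map (fun b => flat_map (fun c =>
    map (fun d => Rect a b c d) (List.seq 0 B)) (List.seq 0 B)) (List.seq 0 B)) (List.seq 0 B).

Lemma all_rectsP B y : r1 y < B -> c1 y < B -> r2 y < B -> c2 y < B -> List.In y (all_rects B).
Proof.
case: y => a b c d /= ha hb hc hd.
rewrite /all_rects; apply/in_flat_map; exists a; split; first by apply/in_seq; to_lia; lia.
apply/in_flat_map; exists b; split; first by apply/in_seq; to_lia; lia.
apply/in_flat_map; exists c; split; first by apply/in_seq; to_lia; lia.
apply/in_map_iff; exists d; split => //; apply/in_seq; to_lia; lia.
Qed.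

Lemma children_list h w (P : rect -> Prop) : (forall y, P y -> valid_in h w y) ->
  exists l, forall y, P y <-> List.In y l.
Proof.
move=> HV; have [l Hl] := filter_ex (all_rects (h + w)) P.
exists l => y; rewrite Hl; split; last by case.
move=> Py; split => //; have := HV y Py; move=> V; apply: all_rectsP; to_lia; lia.
Qed.

Section Complete.
Variables (Sig N : finType) (G : TG Sig N).

Lemma derives_trans m n (p1 : 'M[Sig + N]_(m, n)) pi1 p2 pi2 p3 pi3 :
  derives G p1 pi1 p2 pi2 -> derives G p2 pi2 p3 pi3 -> derives G p1 pi1 p3 pi3.
Proof.
elim=> // p pi p' pi' p'' pi'' Hs _ IH H; apply: derives_step Hs _; exact: IH.
Qed.

Lemma derives_part m n (p1 : 'M[Sig + N]_(m, n)) pi1 p2 pi2 :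
  derives G p1 pi1 p2 pi2 -> part m n pi1 -> part m n pi2.
Proof.
elim=> // p pi p' pi' p'' pi'' Hs _ IH H; apply: IH; exact: step_part Hs H.
Qed.

Lemma shift_inj x y y' : shift x y = shift x y' -> y = y'.
Proof.
case: y y' => a b c d [a' b' c' d'] /= [E1 E2 E3 E4].
f_equal; move: E1 E2 E3 E4; clear; move=> *; to_lia; lia.
Qed.


Lemma shift_sub x y i j : valid_in (r2 x - r1 x).+1 (c2 x - c1 x).+1 y ->
  r1 x <= r2 x -> c1 x <= c2 x -> in_rect (shift x y) i j -> in_rect x i j.
Proof. move=> V h1 h2 I; to_lia; lia. Qed.

Lemma shift_valid m n x y : valid_in (r2 x - r1 x).+1 (c2 x - c1 x).+1 y ->
  valid_in m n x -> valid_in m n (shift x y).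
Proof. move=> V1 V2; to_lia; lia. Qed.

Lemma shift_cover x (P : rect -> Prop) i j :
  part (r2 x - r1 x).+1 (c2 x - c1 x).+1 P -> in_rect x i j ->
  exists y, P y /\ in_rect (shift x y) i j.
Proof.
move=> [_ Hc] I.
have [y [[Py Iy] _]] : exists! y, P y /\ in_rect y (i - r1 x) (j - c1 x).
  apply: Hc; move: I; clear => I; to_lia; lia.
exists y; split => //; rewrite in_rect_shift Iy andbT; move: I; clear => I; to_lia; lia.
Qed.

Lemma shift_disj x (P : rect -> Prop) y y' i j :
  part (r2 x - r1 x).+1 (c2 x - c1 x).+1 P -> P y -> P y' ->
  in_rect (shift x y) i j -> in_rect (shift x y') i j -> y = y'.
Proof.
move=> Hp Py Py'; rewrite !in_rect_shift => /and3P [_ _ I] /and3P [_ _ I'].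
exact: (part_disj Hp Py Py' I I').
Qed.

Definition Inv m n (pi : rect -> Prop) (x : rect) (P : rect -> Prop)
  (g : nat -> nat -> option (Sig + N)) (p p1 : 'M[Sig + N]_(m, n))
  (D : rect -> Prop) (pk : 'M[Sig + N]_(m, n)) (pik : rect -> Prop) :=
 [/\ forall z, pik z <-> (pi z /\ z <> x) \/ (exists y, P y /\ ~ D y /\ z = shift x y) \/
                         (exists i j y, [/\ P y, D y, in_rect (shift x y) i j & z = Rect i j i j]),
   forall i j, ~~ in_rect x i j -> pget pk i j = pget p i j,
   forall i j y, P y -> D y -> in_rect (shift x y) i j -> pget pk i j = g (i - r1 x) (j - c1 x) &
   forall i j y, P y -> ~ D y -> in_rect (shift x y) i j -> pget pk i j = pget p1 i j].

Lemma Inv_ext m n pi x P g (p p1 : 'M[Sig + N]_(m, n)) D D' pk pik :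
  (forall y, D y <-> D' y) -> Inv pi x P g p p1 D pk pik -> Inv pi x P g p p1 D' pk pik.
Proof.
move=> E [H1 H2 H3 H4]; split => //.
- move=> z; rewrite H1; split.
    case=> [A|[[y [A [B C]]]|[i [j [y [A B C F]]]]]]; [left|right;left|right;right] => //.
      by exists y; split => //; split => //; rewrite -E.
    by exists i, j, y; split => //; rewrite -E.
  case=> [A|[[y [A [B C]]]|[i [j [y [A B C F]]]]]]; [left|right;left|right;right] => //.
    by exists y; split => //; split => //; rewrite E.
  by exists i, j, y; split => //; rewrite E.
- by move=> i j y Py /E; apply: H3.
- by move=> i j y Py Dy; apply: H4 => // /E.
Qed.


Lemma local_lt x i j : in_rect x i j -> (i - r1 x < (r2 x - r1 x).+1) && (j - c1 x < (c2 x - c1 x).+1).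
Proof. move=> I; to_lia; lia. Qed.

Lemma complete X h w g : T G X h w g ->
  forall m n (p : 'M[Sig + N]_(m, n)) pi x,
  part m n pi -> pi x -> valid_in m n x ->
  h = (r2 x - r1 x).+1 -> w = (c2 x - c1 x).+1 -> homog p x (inr X) ->
  exists p2 pi2, [/\ derives G p pi p2 pi2,
    (forall i j, in_rect x i j -> pget p2 i j = g (i - r1 x) (j - c1 x)),
    (forall i j, ~~ in_rect x i j -> pget p2 i j = pget p i j) &
    (forall z, pi2 z <-> (pi z /\ z <> x) \/ (exists i j, in_rect x i j /\ z = Rect i j i j))].
Proof.
elim=> {X h w g}.
  move=> X h w g t -> -> Ht Hg m n p pi x Hp Px Vx E1 E2 Hx.
  have Er : r1 x = r2 x by move: Vx E1; clear; move=> *; to_lia; lia.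
  have Ec : c1 x = c2 x by move: Vx E2; clear; move=> *; to_lia; lia.
  pose p' : 'M[Sig + N]_(m, n) := (\matrix_(i, j) if in_rect x i j then inl t else p i j)%R.
  exists p', pi; split.
  - apply: derives_step (derives_refl _ _ _).
    apply: (@step_fixed _ _ G m n p pi p' pi x X t) => //.
    by move=> i j; rewrite mxE.
  - move=> i j I.
    have /andP [Hi Hj] := in_rect_valid Vx I.
    rewrite (pgetE _ Hi Hj) mxE /= I.
    have -> : i - r1 x = 0 by move: I Er; clear; move=> *; to_lia; lia.
    have -> : j - c1 x = 0 by move: I Ec; clear; move=> *; to_lia; lia.
    by rewrite Hg.
  - move=> i j NI; apply: pget_eq_gen => i' j' Ei Ej; subst i j; by rewrite mxE (negbTE NI).
  - move=> z; split.
      move=> Pz; case: (classic (z = x)) => [->|Nz]; last by left.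
      right; exists (r1 x), (c1 x); split; first by to_lia; lia.
      by case: (x) Er Ec => a b c d /= -> ->.
    case=> [[]//|[i [j [I ->]]]].
    have <- : x = Rect i j i j by move: I Er Ec; case: (x) => a b c d /= I Er Ec; to_lia; f_equal; lia.
    done.
move=> X h w g om s P Hv HL Hs Hc IH m n p pi x Hp Px Vx E1 E2 Hx.
subst h w.
have HpP : part (r2 x - r1 x).+1 (c2 x - c1 x).+1 P by case: Hs => [[A [B _]] _]; split.
have Vx' := Vx; move/and4P: Vx' => [h1 h2 h3 h4].
pose p1 : 'M[Sig + N]_(m, n) := (\matrix_(i, j)
  if in_rect x i j then (if pget s (i - r1 x) (j - c1 x) is Some a then inr a else p i j) else p i j)%R.
pose pi1 := fun z => (pi z /\ z <> x) \/ exists y, P y /\ z = shift x y.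
have Hp1in : forall i j, in_rect x i j -> pget p1 i j = omap inr (pget s (i - r1 x) (j - c1 x)).
  move=> i j I; have /andP [Hi Hj] := in_rect_valid Vx I.
  have /andP [Li Lj] := local_lt I.
  by rewrite (pgetE _ Hi Hj) (pgetE _ Li Lj) mxE /= I (pgetE _ Li Lj).
have Hstep : step G p pi p1 pi1.
  apply: (@step_var _ _ G m n p pi p1 pi1 x X om s P) => //.
  move=> i j; case: ifP => I.
    by rewrite -(Hp1in _ _ I) pget_ord.
  by rewrite mxE I.
have Hp1 : part m n pi1 := step_part Hstep Hp.
have main : forall l (D : rect -> Prop) pk pik,
    (forall y, List.In y l -> P y) -> part m n pik ->
    Inv pi x P g p p1 D pk pik ->
    exists pk' pik', derives G pk pik pk' pik' /\
      Inv pi x P g p p1 (fun y => D y \/ List.In y l) pk' pik'.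
  elim=> [|y l IHl] D pk pik Hl Hpk HI.
    exists pk, pik; split; first exact: derives_refl.
    by apply: Inv_ext HI => y; split; [left|case].
  have Py : P y by apply: Hl; left.
  have Hl' : forall y, List.In y l -> P y by move=> y' I; apply: Hl; right.
  case: (classic (D y)) => Dy.
    have [pk' [pik' [Hd HI']]] := IHl D pk pik Hl' Hpk HI.
    exists pk', pik'; split => //; apply: Inv_ext HI' => y'; split.
      by case=> [|I]; [left|right; right].
    by case=> [|[<-|I]]; [left|left|right].
  have [HI1 HI2 HI3 HI4] := HI.
  have Vy := (proj1 HpP) y Py.
  have [Y LY] : exists Y, label s y = Some Y.
    rewrite /label; move: Vy => /and4P [a b c d].
    have Li : r1 y < (r2 x - r1 x).+1 by apply: leq_ltn_trans c.
    have Lj : c1 y < (c2 x - c1 x).+1 by apply: leq_ltn_trans d.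
    by rewrite (pgetE _ Li Lj); eexists.
  have Pkx : pik (shift x y) by apply/HI1; right; left; exists y.
  have Vsxy := shift_valid Vy Vx.
  have Hh : homog pk (shift x y) (inr Y).
    move=> i j I; rewrite (HI4 i j y) //.
    have Ix := shift_sub Vy h1 h2 I.
    rewrite Hp1in //.
    move: I; rewrite in_rect_shift => /and3P [_ _ I].
    by rewrite ((proj2 (proj2 (proj1 Hs))) y Py _ _ I) LY.
  have E1' : (r2 y - r1 y).+1 = (r2 (shift x y) - r1 (shift x y)).+1 by rewrite /= subnDl.
  have E2' : (c2 y - c1 y).+1 = (c2 (shift x y) - c1 (shift x y)).+1 by rewrite /= subnDl.
  have [pk1 [pik1 [Hd1 Ein Eout Epi]]] :=
    IH y Y Py LY m n pk pik (shift x y) Hpk Pkx Vsxy E1' E2' Hh.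
  have HI' : Inv pi x P g p p1 (fun y' => D y' \/ y' = y) pk1 pik1.
    split.
    - move=> z; rewrite Epi HI1; split.
        case=> [[[A|[[y' [A [B C]]]|[i [j [y' [A B C F]]]]]] Nz]|[i [j [I ->]]]].
        + by left.
        + right; left; exists y'; split => //; split => //.
          by case=> // E; apply: Nz; rewrite C E.
        + by right; right; exists i, j, y'; split => //; left.
        + by right; right; exists i, j, y; split => //; right.
      case=> [A|[[y' [A [B C]]]|[i [j [y' [A B C F]]]]]].
      + left; split; first by left.
        case: A => A Nz E; apply: Nz; subst z.
        move/and4P: Vsxy => [a b _ _].
        have I := corner_in a b.
        by apply: (part_disj Hp A Px I); apply: shift_sub I.
      + left; split; first by right; left; exists y'; split => //; split => // Dy'; apply: B; left.
        move=> E; apply: B; right; rewrite C in E; exact: shift_inj E.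
      + case: B => [Dy'|Ey'].
          left; split; first by right; right; exists i, j, y'.
          move=> E; subst z; apply: Dy; rewrite -E in Hh.
          suff <- : y' = y by [].
          apply: (shift_disj HpP A Py C); rewrite -E; to_lia; lia.
        by subst y'; right; exists i, j.
    - move=> i j NI; rewrite Eout ?HI2 //; apply/negP => I; move/negP: NI; apply.
      exact: shift_sub I.
    - move=> i j y' Py' [Dy'|Ey'] I.
        have Ny : y' <> y by move=> E; apply: Dy; rewrite -E.
        rewrite Eout ?(HI3 i j y') //; apply/negP => I'; apply: Ny.
        exact: (shift_disj HpP Py' Py I I').
      subst y'; rewrite Ein //; rewrite /subf /=; f_equal; move: I; clear; move=> I; to_lia; lia.
    - move=> i j y' Py' Ny' I.
      rewrite Eout ?(HI4 i j y') //.
        by move=> Dy'; apply: Ny'; left.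
      apply/negP => I'; apply: Ny'; right.
      exact: (shift_disj HpP Py' Py I I').
  have Hpk1 := derives_part Hd1 Hpk.
  have [pk' [pik' [Hd HI'']]] := IHl _ pk1 pik1 Hl' Hpk1 HI'.
  exists pk', pik'; split; first exact: derives_trans Hd1 Hd.
  apply: Inv_ext HI'' => y'; split.
    by case=> [[|<-]|I]; [left|right;left|right;right].
  by case=> [|[<-|I]]; [left;left|left;right|right].
have [l Hlst] := children_list (proj1 HpP).
have Inv0 : Inv pi x P g p p1 (fun _ => False) p1 pi1.
  split => //.
  - move=> z; rewrite /pi1; split.
      case=> [A|[y [A B]]]; first by left.
      by right; left; exists y; split => //; split => //.
    case=> [A|[[y [A [_ B]]]|[i [j [y [_ [] _ _]]]]]]; first by left.
    by right; exists y.
  - move=> i j NI; apply: pget_eq_gen => i' j' Ei Ej; subst i j; by rewrite mxE (negbTE NI).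
have [pk' [pik' [Hd HI]]] := main l (fun _ => False) p1 pi1 (fun y => proj2 (Hlst y)) Hp1 Inv0.
have [HI1 HI2 HI3 HI4] := HI.
exists pk', pik'; split.
- exact: derives_step Hstep Hd.
- move=> i j I; have [y [Py Iy]] := shift_cover HpP I.
  by apply: (HI3 i j y) => //; right; apply/Hlst.
- exact: HI2.
- move=> z; rewrite HI1; split.
    case=> [A|[[y [A [B _]]]|[i [j [y [A B C ->]]]]]].
    + by left.
    + by case: B; right; apply/Hlst.
    + by right; exists i, j; split => //; exact: (shift_sub ((proj1 HpP) y A) h1 h2 C).
  case=> [A|[i [j [I ->]]]]; first by left.
  have [y [Py Iy]] := shift_cover HpP I.
  by right; right; exists i, j, y; split => //; right; apply/Hlst.
Qed.

End Complete.


Lemma pget_map (T1 T2 : Type) (f : T1 -> T2) m n (M : 'M[T1]_(m, n)) i j :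
  pget (map_mx f M) i j = omap f (pget M i j).
Proof.
case Hij: ((i < m) && (j < n)).
  move/andP: Hij => [Hi Hj]; by rewrite !(pgetE _ Hi Hj) mxE.
by rewrite !pget_out ?Hij.
Qed.

Section Lang.
Variables (Sig N : finType) (G : TG Sig N).

Definition whole m n := Rect 0 0 m.-1 n.-1.

Lemma part_whole m n : 0 < m -> 0 < n -> part m n (fun z => z = whole m n).
Proof.
move=> Hm Hn; split.
  by move=> x ->; rewrite /whole; to_lia; lia.
move=> i j Hi Hj; exists (whole m n); split; first by split => //; rewrite /whole; to_lia; lia.
by move=> x [].
Qed.

Lemma TGlang_sound m n (p : 'M[Sig]_(m, n)) : TGlang G p ->
  T G (tg_start G) m n (fun i j => omap inl (pget p i j)).
Proof.
move=> [Hm [Hn [pi0 [pif [E0 [Ef Hd]]]]]].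
have Hp0 : part m n pi0.
  have [A B] := part_whole Hm Hn; split.
    by move=> x /E0 ->; apply: A.
  move=> i j Hi Hj; have [x [[Px Ix] U]] := B i j Hi Hj.
  exists x; split; first by split => //; apply/E0.
  by move=> y [/E0 Py Iy]; apply: U.
have := @sound _ _ G m n _ _ _ _ Hd Hp0 _ (whole m n) (tg_start G) _ _.
rewrite /whole /= !subn0 !prednK // => H.
apply: T_ext; first apply: H.
- move=> i j Hi Hj; exists (p (Ordinal Hi) (Ordinal Hj)).
  by rewrite pget_map (pgetE _ Hi Hj).
- by apply/E0.
- move=> i j I; have /andP [Hi Hj] : (i < m) && (j < n) by move: I; clear -Hm Hn; move=> I; to_lia; lia.
  by rewrite (pgetE _ Hi Hj) mxE.
- by move=> i j _ _; rewrite /subf !add0n pget_map.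
Qed.

Lemma TGlang_complete m n (p : 'M[Sig]_(m, n)) : 0 < m -> 0 < n ->
  T G (tg_start G) m n (fun i j => omap inl (pget p i j)) -> TGlang G p.
Proof.
move=> Hm Hn HT.
have Hp0 := part_whole Hm Hn.
have Vw : valid_in m n (whole m n) by rewrite /whole; to_lia; lia.
have Em : m = (r2 (whole m n) - r1 (whole m n)).+1 by rewrite /= subn0 prednK.
have En : n = (c2 (whole m n) - c1 (whole m n)).+1 by rewrite /= subn0 prednK.
have Hh : homog (const_mx (inr (tg_start G)) : 'M[Sig + N]_(m, n)) (whole m n) (inr (tg_start G)).
  move=> i j I; have /andP [Hi Hj] : (i < m) && (j < n) by move: I; clear -Hm Hn; move=> I; to_lia; lia.
  by rewrite (pgetE _ Hi Hj) mxE.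
have [p2 [pi2 [Hd Ein Eout Epi]]] := complete HT Hp0 (erefl _) Vw Em En Hh.
split => //; split => //.
exists (fun z => z = whole m n), pi2; split; first done; split.
- move=> z; rewrite Epi; split.
    case=> [[]//|[i [j [I ->]]]]; exists i, j; split => //; move: I; clear -Hm Hn; move=> I; to_lia; lia.
  case=> [i [j [Hi Hj ->]]]; right; exists i, j; split => //; rewrite /whole; to_lia; lia.
- suff -> : map_mx inl p = p2 by [].
  apply/matrixP => i j.
  have I : in_rect (whole m n) i j by rewrite /whole; move: (ltn_ord i) (ltn_ord j); clear; move=> *; to_lia; lia.
  move: (Ein _ _ I); rewrite /= !subn0 !pget_ord => [[->]].
  by rewrite mxE.
Qed.

End Lang.


Definition NT : finType := option (bool * bool * bool).
Definition z0 : 'I_2 := ord0.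
Definition z1 : 'I_2 := ord_max.

Lemma I2_cases (k : 'I_2) : k = z0 \/ k = z1.
Proof. case: k => [[|[|k]] Hk]; [left|right|] ; try (by apply: val_inj). done. Qed.

Definition colo (o : option NT) : bool := if o is Some (Some (c, _, _)) then c else false.

Definition okt (t : 'M[option NT]_2) : bool :=
  [&& [forall k : 'I_2 * 'I_2, t k.1 k.2 != Some None],
      (t z0 z0 == None) || (t z0 z0 != t z0 z1),
      (t z1 z0 == None) || (t z1 z0 != t z1 z1),
      (t z0 z0 == None) || (t z0 z0 != t z1 z0),
      (t z0 z1 == None) || (t z0 z1 != t z1 z1) &
      [forall k : 'I_2 * 'I_2, t k.1 k.2 != None] ==>
        (colo (t z0 z0) (+) colo (t z0 z1) (+) colo (t z1 z0) (+) colo (t z1 z1) == false)].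

Definition om0 : {set 'M[option NT]_2} := [set t | okt t].

Definition fix0 : {set NT * bool} := [set x : NT * bool | if x.1 is Some (c, _, _) then x.2 == c else false].

Definition G0 : TG bool NT := MkTG None fix0 [set (None, om0)].

Lemma G0_TG : is_TG G0.
Proof.
move=> A om; rewrite /= inE => /eqP [_ ->] t; rewrite inE.
case/andP => _ /and5P [H1 H2 H3 H4 _].
apply/negP => /existsP [b /existsP [k /andP [_ /forallP Hk]]].
have E : forall k', k' != k -> t k'.1 k'.2 = Some b.
  by move=> k' Nk; move: (Hk k'); rewrite Nk => /eqP.
clear Hk; case: k E => k1 k2 E.
have X : forall a c, (a, c) != (k1, k2) -> t a c = Some b by move=> a c; apply: (E (a, c)).
case: (I2_cases k1) => E1; case: (I2_cases k2) => E2; subst k1 k2.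
- by move: H2; rewrite !X // => /orP [/eqP //|]; rewrite eqxx.
- by move: H3; rewrite !X // => /orP [/eqP //|]; rewrite eqxx.
- by move: H4; rewrite !X // => /orP [/eqP //|]; rewrite eqxx.
- by move: H1; rewrite !X // => /orP [/eqP //|]; rewrite eqxx.
Qed.

Lemma T_inv (Sig N : finType) (G : TG Sig N) X h w g : T G X h w g ->
  (exists t, [/\ h = 1, w = 1, (X, t) \in tg_fixed G & g 0 0 = Some (inl t)]) \/
  exists om (s : 'M[N]_(h, w)) P, [/\ (X, om) \in tg_var G, LOC om s, strong_hpartition s P &
    forall y Y, P y -> label s y = Some Y -> T G Y (r2 y - r1 y).+1 (c2 y - c1 y).+1 (subf g y)].
Proof.
case=> {X h w g}.
  by move=> X h w g t *; left; exists t.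
by move=> X h w g om s P *; right; exists om, s, P.
Qed.

Lemma framedS (T0 : Type) h w (s : 'M[T0]_(h, w)) k l : framed s k.+1 l.+1 = pget s k l.
Proof. by []. Qed.

Lemma tile_entry (T0 : Type) h w (s : 'M[T0]_(h, w)) i j (a b : 'I_2) :
  tile_at s i j a b = framed s (i + a) (j + b).
Proof. by rewrite /tile_at mxE. Qed.

Definition colp m n (p : 'M[bool]_(m, n)) i j : bool := if pget p i j is Some c then c else false.

Lemma G0_pix m n (p : 'M[bool]_(m, n)) (s : 'M[NT]_(m, n)) P :
  LOC om0 s -> strong_hpartition s P ->
  (forall y Y, P y -> label s y = Some Y ->
     T G0 Y (r2 y - r1 y).+1 (c2 y - c1 y).+1 (subf (fun i j => omap inl (pget p i j)) y)) ->
  forall i j, i < m -> j < n -> exists a b, pget s i j = Some (Some (colp p i j, a, b)).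
Proof.
move=> [Hm [Hn HL]] [[HV [HC HH]] _] Hc i j Hi Hj.
have [y [[Py Iy] _]] := HC i j Hi Hj.
have Hy := HH y Py _ _ Iy.
have := HL i j (ltnW Hi) (ltnW Hj); rewrite inE => /andP [/forallP Hk _].
move: (Hk (z1, z1)); rewrite /= tile_entry /=.
rewrite !addn1 framedS.
case Es: (pget s i j) => [v|]; last by rewrite (pgetE _ Hi Hj) in Es.
case: v Es => [[[c a] b]|] Es; last by rewrite eqxx.
move=> _.
exists a, b.
move: Hy; rewrite Es => Ly.
have := Hc y _ Py (esym Ly).
case/T_inv => [[t [E1 E2 Ht Hg]]|[om [s' [P' [Hv _ _ _]]]]]; last first.
  by move: Hv; rewrite /= inE.
move: Ht; rewrite /= inE /= => /eqP Etc; subst t.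
have Er : r1 y = i by move: E1 Iy (HV y Py); clear; move=> *; to_lia; lia.
have Ec : c1 y = j by move: E2 Iy (HV y Py); clear; move=> *; to_lia; lia.
move: Hg; rewrite /subf !addn0 Er Ec /colp.
by case: (pget p i j) => [c'|] //= [->].
Qed.

Lemma G0_xor m n (p : 'M[bool]_(m, n)) : TGlang G0 p ->
  forall i j, i.+1 < m -> j.+1 < n ->
  colp p i j (+) colp p i j.+1 (+) colp p i.+1 j (+) colp p i.+1 j.+1 = false.
Proof.
move=> HT i j Hi Hj.
case/T_inv: (TGlang_sound HT) => [[t [_ _ Ht _]]|[om [s [P [Hv HL Hs Hc]]]]].
  by move: Ht; rewrite /= inE.
move: Hv; rewrite /= inE => /eqP [Eom]; subst om.
have Pix := G0_pix HL Hs Hc.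
have [a1 [b1 E1]] := Pix i j (ltnW Hi) (ltnW Hj).
have [a2 [b2 E2]] := Pix i j.+1 (ltnW Hi) Hj.
have [a3 [b3 E3]] := Pix i.+1 j Hi (ltnW Hj).
have [a4 [b4 E4]] := Pix i.+1 j.+1 Hi Hj.
case: HL => _ [_ HL].
have := HL i.+1 j.+1 (ltnW Hi) (ltnW Hj); rewrite inE => /and5P [_ _ _ _ /andP [_ /implyP H]].
move: H; rewrite !tile_entry /= !addn0 !addn1 !framedS E1 E2 E3 E4 /=.
move=> H; apply/eqP; apply: H.
apply/forallP => -[k1 k2]; rewrite tile_entry /=.
by case: (I2_cases k1) => ->; case: (I2_cases k2) => -> /=;
  rewrite ?addn0 ?addn1 framedS ?E1 ?E2 ?E3 ?E4.
Qed.

Definition pic n (e : nat -> bool) : 'M[bool]_(n, n) := (\matrix_(i, j) (e i (+) e j))%R.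
Definition spic n (e : nat -> bool) : 'M[NT]_(n, n) :=
  (\matrix_(i, j) Some (e i (+) e j, odd i, odd j))%R.

Definition Fs n (e : nat -> bool) k l : option NT :=
  if (0 < k <= n) && (0 < l <= n) then Some (Some (e k.-1 (+) e l.-1, odd k.-1, odd l.-1)) else None.

Lemma framed_spic n e k l : framed (spic n e) k l = Fs n e k l.
Proof.
rewrite /Fs; case: k => [|k]; case: l => [|l] //=; first by rewrite andbF.
rewrite framedS; case Hij: ((k < n) && (l < n)).
  by move/andP: Hij => [Hi Hj]; rewrite (pgetE _ Hi Hj) mxE.
by rewrite pget_out ?Hij.
Qed.

Lemma Fs_h n e k l : Fs n e k l != None -> Fs n e k l != Fs n e k l.+1.
Proof.
rewrite /Fs; case: ifP => // /andP [_ /andP [H0 _]] _; case: ifP => // _.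
apply/negP => /eqP [] _; case: l H0 => [|l] //= _; by case: (odd l).
Qed.

Lemma Fs_v n e k l : Fs n e k l != None -> Fs n e k l != Fs n e k.+1 l.
Proof.
rewrite /Fs; case: ifP => // /andP [/andP [H0 _] _] _; case: ifP => // _.
apply/negP => /eqP [] _; case: k H0 => [|k] //= _; by case: (odd k).
Qed.

Lemma maxmin_eq b d : maxn b d <= minn b d -> b = d.
Proof. rewrite geq_max !leq_min => H; to_lia; lia. Qed.

Lemma pic_in n e : 0 < n -> TGlang G0 (pic n e).
Proof.
move=> Hn; apply: TGlang_complete => //.
pose P := fun y => exists i j, [/\ i < n, j < n & y = Rect i j i j].
apply: (@Tvar _ _ G0 None n n _ om0 (spic n e) P).
- by rewrite /= inE.
- split => //; split => // i j _ _; rewrite inE /okt !tile_entry /= !addn0 !addn1 !framed_spic.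
  apply/andP; split.
    apply/forallP => -[k1 k2] /=; rewrite tile_entry framed_spic /Fs; case: ifP => //.
  apply/and5P; split.
  + by case: eqP => //= /eqP; apply: Fs_h.
  + by case: eqP => //= /eqP; apply: Fs_h.
  + by case: eqP => //= /eqP; apply: Fs_v.
  + by case: eqP => //= /eqP; apply: Fs_v.
  + apply/implyP => /forallP H.
    move: (H (z0, z0)) (H (z1, z1)); rewrite !tile_entry /= !addn0 !addn1 !framed_spic /Fs.
    case: ifP => // /andP [/andP [H1 _] /andP [H2 _]] _.
    case: ifP => // /andP [/andP [_ H3] /andP [_ H4]] _.
    clear H; rewrite !ifT; try (by to_lia; lia).
    case: i H1 H3 => [|i] // _ _; case: j H2 H4 => [|j] // _ _ /=.
    by case: (e i); case: (e i.+1); case: (e j); case: (e j.+1).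
- split; first split.
  + by move=> y [i [j [Hi Hj ->]]]; to_lia; lia.
  + split.
      move=> i j Hi Hj; exists (Rect i j i j); split.
        by split; [exists i, j; split => // | to_lia; lia].
      move=> y [[i' [j' [_ _ ->]]] I]; move: I; clear; move=> I; to_lia; f_equal; lia.
    move=> y [i' [j' [Hi' Hj' ->]]] i j I.
    have [-> ->] : i = i' /\ j = j' by move: I; clear; move=> I; to_lia; lia.
    by [].
  + move=> y y' [a [b [Ha Hb ->]]] [c [d [Hc Hd ->]]] Ne; rewrite /adjacent /label /=.
    rewrite (pgetE _ Ha Hb) (pgetE _ Hc Hd) !mxE /=.
    case/orP => [/orP [/orP [|]|]|] /andP [/eqP E /maxmin_eq E']; subst.
    * by move=> [_] /=; case: (odd a).
    * by move=> [_] /=; case: (odd c).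
    * by move=> [_] /=; case: (odd b).
    * by move=> [_] /=; case: (odd d).
- move=> y Y [i [j [Hi Hj ->]]]; rewrite /label /= (pgetE _ Hi Hj) mxE => -[<-].
  apply: (Tfix (t := e i (+) e j)); rewrite ?subnn //.
    by rewrite /= inE /=.
  by rewrite /subf !addn0 (pgetE _ Hi Hj) mxE.
Qed.


Lemma in_rectP x i j : reflect ((r1 x <= i)%coq_nat /\ (i <= r2 x)%coq_nat /\
  (c1 x <= j)%coq_nat /\ (j <= c2 x)%coq_nat) (in_rect x i j).
Proof.
apply: (iffP idP) => H; first by to_lia; lia.
case: H => [/leP a [/leP b [/leP c /leP d]]]; by rewrite /in_rect a b c d.
Qed.

Section Split.
Variables (Sig N : finType) (G : TG Sig N).

Lemma first_split X h w g : T G X h w g -> ~ (h = 1 /\ w = 1) ->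
  exists h1 w1, h1 = h /\ w1 = w /\
  exists Y om (s : 'M[N]_(h1, w1)) P, [/\ (forall g', T G Y h1 w1 g' -> T G X h w g'),
    (Y, om) \in tg_var G, LOC om s, strong_hpartition s P &
    (exists y, P y /\ y <> whole h1 w1) /\
    forall y Yl, P y -> label s y = Some Yl -> T G Yl (r2 y - r1 y).+1 (c2 y - c1 y).+1 (subf g y)].
Proof.
elim=> {X h w g}.
  by move=> X h w g t -> -> _ _ H; case: H.
move=> X h w g om s P Hv HL Hs Hc IH Hne.
case: (classic (exists y, P y /\ y <> whole h w)) => Hex.
  exists h, w; do 2 split => //.
  by exists X, om, s, P; split.
have [Hh [Hw _]] := HL.
have Hall : forall y, P y -> y = whole h w.
  by move=> y Py; apply: NNPP => Ny; apply: Hex; exists y.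
have [[HV [HC HH]] _] := Hs.
have [y [[Py Iy] _]] := HC 0 0 Hh Hw.
have Ey := Hall y Py; subst y.
have [Y' LY'] : exists Y', label s (whole h w) = Some Y'.
  by rewrite /label /= (pgetE _ Hh Hw); eexists.
have Hch := Hc _ _ Py LY'.
have Eh : (r2 (whole h w) - r1 (whole h w)).+1 = h by rewrite /= subn0 prednK.
have Ew : (c2 (whole h w) - c1 (whole h w)).+1 = w by rewrite /= subn0 prednK.
have Hne' : ~ ((r2 (whole h w) - r1 (whole h w)).+1 = 1 /\ (c2 (whole h w) - c1 (whole h w)).+1 = 1).
  by rewrite Eh Ew.
have [h1 [w1 [E1 [E2 [Y [om' [s' [P' [Hchain Hv' HL' Hs' [Hex' Hc']]]]]]]]]] :=
  IH _ _ Py LY' Hne'.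
exists h1, w1; split; first by rewrite E1 Eh.
split; first by rewrite E2 Ew.
exists Y, om', s', P'; split => //.
- move=> g' HT; have := Hchain g' HT; rewrite Eh Ew => HT'.
  apply: (Tvar Hv HL Hs) => y Yl Py' Ly.
  rewrite (Hall y Py') in Ly *; rewrite LY' in Ly; case: Ly => <-.
  rewrite Eh Ew; apply: (T_ext HT') => i j _ _; by rewrite /subf /= !add0n.
Qed.

End Split.

Section Uniq.
Variables (T0 : Type) (h w : nat) (s : 'M[T0]_(h, w)) (P : rect -> Prop).
Hypothesis Hs : strong_hpartition s P.

Lemma adjI x y :
  ((r2 x).+1 = r1 y /\ (c1 x <= c2 x)%coq_nat /\ (c1 x <= c2 y)%coq_nat /\ (c1 y <= c2 x)%coq_nat /\ (c1 y <= c2 y)%coq_nat) \/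
  ((r2 y).+1 = r1 x /\ (c1 x <= c2 x)%coq_nat /\ (c1 x <= c2 y)%coq_nat /\ (c1 y <= c2 x)%coq_nat /\ (c1 y <= c2 y)%coq_nat) \/
  ((c2 x).+1 = c1 y /\ (r1 x <= r2 x)%coq_nat /\ (r1 x <= r2 y)%coq_nat /\ (r1 y <= r2 x)%coq_nat /\ (r1 y <= r2 y)%coq_nat) \/
  ((c2 y).+1 = c1 x /\ (r1 x <= r2 x)%coq_nat /\ (r1 x <= r2 y)%coq_nat /\ (r1 y <= r2 x)%coq_nat /\ (r1 y <= r2 y)%coq_nat) ->
  adjacent x y.
Proof.
rewrite /adjacent !geq_max !leq_min.
case=> [[/eqP -> [/leP -> [/leP -> [/leP -> /leP ->]]]]|
        [[/eqP -> [/leP -> [/leP -> [/leP -> /leP ->]]]]|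
        [[/eqP -> [/leP -> [/leP -> [/leP -> /leP ->]]]]|
         [/eqP -> [/leP -> [/leP -> [/leP -> /leP ->]]]]]]];
 by rewrite ?orbT.
Qed.

Lemma nb_step z i j i' j' : P z -> in_rect z i j -> i' < h -> j' < w ->
  ((i' = i /\ (j' = j.+1 \/ j = j'.+1)) \/ (j' = j /\ (i' = i.+1 \/ i = i'.+1))) ->
  pget s i' j' = label s z -> in_rect z i' j'.
Proof.
move=> Pz Iz Hi Hj Hn Hl.
have [[HV [HC HH]] Hst] := Hs.
have Hpart : part h w P by split.
have [z' [[Pz' Iz'] U]] := HC i' j' Hi Hj.
case: (classic (z' = z)) => [<-//|Nz].
exfalso; apply: (Hst z z' Pz Pz' (nesym Nz)).
  have N1 : ~ in_rect z i' j' by move=> I; apply: Nz; apply: U.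
  have N2 : ~ in_rect z' i j by move=> I; apply: Nz; apply: (part_disj Hpart Pz' Pz I Iz).
  apply: adjI.
  move/in_rectP: Iz => Iz; move/in_rectP: Iz' => Iz'.
  have N1' : ~ ((r1 z <= i')%coq_nat /\ (i' <= r2 z)%coq_nat /\ (c1 z <= j')%coq_nat /\ (j' <= c2 z)%coq_nat)
    by move=> H; apply: N1; apply/in_rectP.
  have N2' : ~ ((r1 z' <= i)%coq_nat /\ (i <= r2 z')%coq_nat /\ (c1 z' <= j)%coq_nat /\ (j <= c2 z')%coq_nat)
    by move=> H; apply: N2; apply/in_rectP.
  move: (HV z Pz) (HV z' Pz') => V1 V2; to_lia.
  lia.
by rewrite -(HH z' Pz' _ _ Iz') Hl.
Qed.

Lemma walk_h z i j j' : P z -> in_rect z i j -> i < h ->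
  (forall t, ((j <= t /\ t <= j') \/ (j' <= t /\ t <= j))%coq_nat -> t < w /\ pget s i t = label s z) ->
  in_rect z i j'.
Proof.
move=> Pz; move Ed : (j - j' + (j' - j)) => d; elim: d j Ed => [|d IH] j Ed Iz Hi H.
  by have -> : j' = j by move: Ed; clear; move=> *; to_lia; lia.
case: (ltnP j j') => Hjj.
  have [Hw Hl] := H j.+1 (ltac:(to_lia; lia)).
  have Iz1 := nb_step Pz Iz Hi Hw (or_introl (conj erefl (or_introl erefl))) Hl.
  apply: (IH j.+1) => //; first by move: Ed Hjj; clear; move=> *; to_lia; lia.
  by move=> t Ht; apply: H; to_lia; lia.
case: j Ed Iz H Hjj => [|j] Ed Iz H Hjj.
  by move: Ed Hjj; clear; move=> *; to_lia; lia.
have [Hw Hl] := H j (ltac:(to_lia; lia)).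
have Iz1 := nb_step Pz Iz Hi Hw (or_introl (conj erefl (or_intror erefl))) Hl.
apply: (IH j) => //; first by move: Ed Hjj; clear; move=> *; to_lia; lia.
by move=> t Ht; apply: H; to_lia; lia.
Qed.

Lemma walk_v z i i' j : P z -> in_rect z i j -> j < w ->
  (forall t, ((i <= t /\ t <= i') \/ (i' <= t /\ t <= i))%coq_nat -> t < h /\ pget s t j = label s z) ->
  in_rect z i' j.
Proof.
move=> Pz; move Ed : (i - i' + (i' - i)) => d; elim: d i Ed => [|d IH] i Ed Iz Hj H.
  by have -> : i' = i by move: Ed; clear; move=> *; to_lia; lia.
case: (ltnP i i') => Hii.
  have [Hh Hl] := H i.+1 (ltac:(to_lia; lia)).
  have Iz1 := nb_step Pz Iz Hh Hj (or_intror (conj erefl (or_introl erefl))) Hl.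
  apply: (IH i.+1) => //; first by move: Ed Hii; clear; move=> *; to_lia; lia.
  by move=> t Ht; apply: H; to_lia; lia.
case: i Ed Iz H Hii => [|i] Ed Iz H Hii.
  by move: Ed Hii; clear; move=> *; to_lia; lia.
have [Hh Hl] := H i (ltac:(to_lia; lia)).
have Iz1 := nb_step Pz Iz Hh Hj (or_intror (conj erefl (or_intror erefl))) Hl.
apply: (IH i) => //; first by move: Ed Hii; clear; move=> *; to_lia; lia.
by move=> t Ht; apply: H; to_lia; lia.
Qed.

Lemma absorb z R a b : P z -> valid_in h w R ->
  (forall i j, in_rect R i j -> pget s i j = label s z) ->
  in_rect R a b -> in_rect z a b -> forall i j, in_rect R i j -> in_rect z i j.
Proof.
move=> Pz VR HR IRa Iza i j IR.
have Ha : a < h by have /andP [] := in_rect_valid VR IRa.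
have Hj : j < w by have /andP [] := in_rect_valid VR IR.
have Iaj : in_rect z a j.
  apply: (walk_h Pz Iza Ha) => t Ht.
  have It : in_rect R a t by move: IRa IR Ht; clear; move=> *; to_lia; lia.
  split; last exact: HR.
  by have /andP [] := in_rect_valid VR It.
apply: (walk_v Pz Iaj Hj) => t Ht.
have It : in_rect R t j by move: IRa IR Ht; clear; move=> *; to_lia; lia.
split; last exact: HR.
by have /andP [] := in_rect_valid VR It.
Qed.

End Uniq.

Lemma strong_unique (T0 : Type) h w (s : 'M[T0]_(h, w)) P P' z :
  strong_hpartition s P -> strong_hpartition s P' -> P z -> P' z.
Proof.
move=> Hs Hs' Pz.
have [[HV [HC HH]] _] := Hs; have [[HV' [HC' HH']] _] := Hs'.
have Vz := HV z Pz; move/and4P: (Vz) => [a1 a2 a3 a4].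
have Iz := corner_in a1 a2.
have [z' [[Pz' Iz'] _]] := HC' (r1 z) (c1 z) (leq_ltn_trans a1 a3) (leq_ltn_trans a2 a4).
have Lz : label s z' = label s z by rewrite -(HH' z' Pz' _ _ Iz').
have S1 : forall i j, in_rect z' i j -> in_rect z i j.
  apply: (absorb Hs Pz (HV' z' Pz')) Iz' Iz => i j I.
  by rewrite (HH' z' Pz' _ _ I) Lz.
have S2 : forall i j, in_rect z i j -> in_rect z' i j.
  apply: (absorb Hs' Pz' Vz) Iz Iz' => i j I.
  by rewrite (HH z Pz _ _ I) Lz.
have Vz' := HV' z' Pz'; move/and4P: Vz' => [b1 b2 _ _].
suff <- : z' = z by [].
apply: rect_eq => // i j; apply/idP/idP; [exact: S1|exact: S2].
Qed.


Definition box n := ('I_n * 'I_n * 'I_n * 'I_n)%type.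
Definition boxP n (N0 : finType) (s : 'M[N0]_(n, n)) (X : N0) (b : box n) : bool :=
  [forall i : 'I_n, forall j : 'I_n,
    (s i j == X) == ((b.1.1.1 <= i <= b.1.2) && (b.1.1.2 <= j <= b.2))].
Definition kf n (N0 : finType) (s : 'M[N0]_(n, n)) : {ffun N0 -> option (box n)} :=
  [ffun X => [pick b | boxP s X b]].

Lemma kf_inj n (N0 : finType) (s s' : 'M[N0]_(n, n)) Q :
  regional_hpartition s Q -> kf s = kf s' -> s = s'.
Proof.
move=> [[HV [HC HH]] Hreg] Ek; apply/matrixP => i j.
have [q [[Pq Iq] _]] := HC i j (ltn_ord i) (ltn_ord j).
move/and4P: (HV q Pq) => [a1 a2 a3 a4].
pose b : box n := (Ordinal (leq_ltn_trans a1 a3), Ordinal (leq_ltn_trans a2 a4), Ordinal a3, Ordinal a4).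
have Hb : boxP s (s i j) b.
  apply/forallP => i'; apply/forallP => j'; apply/eqP; rewrite /=.
  have Lq : label s q = Some (s i j) by rewrite -(HH q Pq _ _ Iq) pget_ord.
  apply/idP/idP.
    move/eqP => E.
    have [q' [[Pq' Iq'] _]] := HC i' j' (ltn_ord i') (ltn_ord j').
    case: (classic (q' = q)) => [Eq|Nq].
      by subst q'; move: Iq'; rewrite /in_rect.
    exfalso; apply: (Hreg q' q Pq' Pq Nq).
    by rewrite -(HH q' Pq' _ _ Iq') pget_ord E Lq.
  move=> H; have I' : in_rect q i' j' by move: H; rewrite /in_rect.
  by move: (HH q Pq _ _ I'); rewrite Lq pget_ord => -[->].
have Hk : kf s (s i j) = kf s' (s i j) by rewrite Ek.
rewrite !ffunE in Hk.
case: pickP Hk => [b0 Hb0|/(_ b)]; last by rewrite Hb.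
case: pickP => [b1 Hb1 [Eb]|//]; subst b1.
move/forallP/(_ i)/forallP/(_ j): Hb0; rewrite eqxx => /eqP Hin.
move/forallP/(_ i)/forallP/(_ j): Hb1; rewrite -Hin => /eqP.
by move/eqP.
Qed.


Lemma pow_mono a b e : a <= b -> a ^ e <= b ^ e.
Proof. move=> H; elim: e => [|e IH]; rewrite ?expn0 // !expnS; exact: leq_mul. Qed.

Lemma lin_exp c d : exists t, c * t + d < 2 ^ t.
Proof.
exists ((2 * c + d + 1) * 2).
rewrite expnM.
have Hu : 2 * c + d + 1 < 2 ^ (2 * c + d + 1) := ltn_expl _ (isT : 1 < 2).
move: Hu; set u := 2 * c + d + 1; set X := 2 ^ u => Hu.
have Eu : u = 2 * c + d + 1 by [].
rewrite expnS expn1.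
move/ltP: Hu => Hu; apply/ltP; unfold addn, muln in *; nia.
Qed.

Lemma growth A B : exists k, 0 < k /\ A * ((k.+1) ^ 4 + 1) ^ B < 2 ^ k.
Proof.
have [t Ht] := lin_exp (4 * B) (A + 5 * B).
exists (2 ^ t); split; first by rewrite expn_gt0.
have X1 : 0 < 2 ^ t by rewrite expn_gt0.
have H1 : (2 ^ t).+1 ^ 4 + 1 <= 2 ^ (4 * t + 5).
  have H0 : (2 ^ t).+1 ^ 4 <= (2 * 2 ^ t) ^ 4.
    apply: pow_mono; rewrite mul2n -addnn -addn1 leq_add2l //.
  rewrite expnD (mulnC 4 t) expnM (_ : 2 ^ 5 = 32) //.
  have E : (2 * 2 ^ t) ^ 4 = 16 * (2 ^ t) ^ 4 by rewrite expnMn.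
  rewrite E in H0.
  have X4 : 0 < (2 ^ t) ^ 4 by rewrite expn_gt0 X1.
  move: H0 X4; set Y := (2 ^ t) ^ 4; set Z := (2 ^ t).+1 ^ 4 => H0 X4.
  move/leP: H0 => H0; move/ltP: X4 => X4; apply/leP; unfold addn, muln in *. lia.
have H2 : ((2 ^ t).+1 ^ 4 + 1) ^ B <= 2 ^ ((4 * t + 5) * B).
  by rewrite expnM; apply: pow_mono.
have H3 : 0 < 2 ^ ((4 * t + 5) * B) by rewrite expn_gt0.
apply: (leq_ltn_trans (leq_mul (leqnn A) H2)).
apply: (@leq_trans (2 ^ A * 2 ^ ((4 * t + 5) * B))).
  by rewrite ltn_pmul2r // ltn_expl.
rewrite -expnD; apply: leq_pexp2l => //.
move/ltP: Ht => Ht; apply/leP; unfold addn, muln in *; lia.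
Qed.


Lemma change_point (Ef : nat -> bool) : Ef 0 = false -> forall m, Ef m = true ->
  exists i, i < m /\ Ef i != Ef i.+1.
Proof.
move=> E0; elim=> [|m IH] Em; first by rewrite E0 in Em.
case Em': (Ef m).
  by have [i [Hi Ni]] := IH Em'; exists i; split => //; apply: ltnW.
by exists m; split => //; rewrite Em Em'.
Qed.

Definition hyb n (Z : rect) (e1 e2 : nat -> bool) : 'M[bool]_(n, n) :=
  (\matrix_(a, b) if in_rect Z a b then e1 a (+) e1 b else e2 a (+) e2 b)%R.

Lemma colp_hyb n Z e1 e2 a b : a < n -> b < n ->
  colp (hyb n Z e1 e2) a b = if in_rect Z a b then e1 a (+) e1 b else e2 a (+) e2 b.
Proof. by move=> Ha Hb; rewrite /colp (pgetE _ Ha Hb) mxE. Qed.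

Lemma hyb_contra n Z e1 e2 i (P2 : rect -> Prop) :
  part n n P2 -> P2 Z -> (exists y, P2 y /\ y <> whole n n) ->
  i.+1 < n -> in_rect Z i i.+1 ->
  e1 i (+) e2 i != e1 i.+1 (+) e2 i.+1 ->
  (forall a b, a.+1 < n -> b.+1 < n ->
    colp (hyb n Z e1 e2) a b (+) colp (hyb n Z e1 e2) a b.+1 (+)
    colp (hyb n Z e1 e2) a.+1 b (+) colp (hyb n Z e1 e2) a.+1 b.+1 = false) -> False.
Proof.
move=> Hp PZ [y [Py Ny]] Hi IZ He Hx.
have VZ := (proj1 Hp) Z PZ.
case: (boolP (in_rect Z i.+1 i)) => IB; last first.
  have := Hx i i Hi Hi.
  rewrite !colp_hyb ?(negbTE IB) ?IZ ?(ltnW Hi) //.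
  rewrite (_ : (if in_rect Z i i then e1 i (+) e1 i else e2 i (+) e2 i) = false); last by case: ifP; rewrite addbb.
  rewrite (_ : (if in_rect Z i.+1 i.+1 then _ else _) = false); last by case: ifP; rewrite addbb.
  by move: He; case: (e1 i); case: (e2 i); case: (e1 i.+1); case: (e2 i.+1).
have NZ : Z <> whole n n.
  move=> EZ; apply: Ny; have Vy := (proj1 Hp) y Py.
  move/and4P: (Vy) => [a1 a2 a3 a4].
  have Iy := corner_in a1 a2.
  have IZy : in_rect Z (r1 y) (c1 y) by rewrite EZ /whole; move: a1 a2 a3 a4; clear; move=> *; to_lia; lia.
  by rewrite -EZ; apply: (part_disj Hp Py PZ Iy IZy).
have Hcase : (0 < r1 Z) \/ (0 < c1 Z) \/ (r2 Z).+1 < n \/ (c2 Z).+1 < n.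
  apply: NNPP => H; apply: NZ.
  move: VZ H; rewrite /whole; case: (Z) => a b c d V H.
  have H' : ~ ((0 < a)%coq_nat \/ (0 < b)%coq_nat \/ (c.+1 < n)%coq_nat \/ (d.+1 < n)%coq_nat).
    by move=> [/ltP ?|[/ltP ?|[/ltP ?|/ltP ?]]]; apply: H; [left|right;left|right;right;left|right;right;right].
  move: V => /= V; to_lia; f_equal; lia.
move: VZ IZ IB => VZ IZ IB.
case: Hcase => [H|[H|[H|H]]].
-
  case E: (r1 Z) H => [|r] // _.
  have Hr : r.+1 < n by move: VZ IZ IB E; clear; move=> *; to_lia; lia.
  have := Hx r i (ltac:(by move: Hr IB VZ E; clear; move=> *; to_lia; lia)) Hi.
  rewrite !colp_hyb; try (by move: Hr Hi; clear; move=> *; to_lia; lia).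
  rewrite (_ : in_rect Z r i = false); last by apply/negP => I; move: I E; clear; move=> *; to_lia; lia.
  rewrite (_ : in_rect Z r i.+1 = false); last by apply/negP => I; move: I E; clear; move=> *; to_lia; lia.
  rewrite (_ : in_rect Z r.+1 i = true); last by move: E IZ IB; clear; move=> *; to_lia; lia.
  rewrite (_ : in_rect Z r.+1 i.+1 = true); last by move: E IZ IB; clear; move=> *; to_lia; lia.
  by move: He; case: (e1 i); case: (e2 i); case: (e1 i.+1); case: (e2 i.+1); case: (e1 r.+1); case: (e2 r).
-
  case E: (c1 Z) H => [|c] // _.
  have Hc : c.+1 < n by move: VZ IZ IB E; clear; move=> *; to_lia; lia.
  have := Hx i c Hi (ltac:(by move: Hc IB VZ E; clear; move=> *; to_lia; lia)).
  rewrite !colp_hyb; try (by move: Hc Hi; clear; move=> *; to_lia; lia).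
  rewrite (_ : in_rect Z i c = false); last by apply/negP => I; move: I E; clear; move=> *; to_lia; lia.
  rewrite (_ : in_rect Z i.+1 c = false); last by apply/negP => I; move: I E; clear; move=> *; to_lia; lia.
  rewrite (_ : in_rect Z i c.+1 = true); last by move: E IZ IB; clear; move=> *; to_lia; lia.
  rewrite (_ : in_rect Z i.+1 c.+1 = true); last by move: E IZ IB; clear; move=> *; to_lia; lia.
  by move: He; case: (e1 i); case: (e2 i); case: (e1 i.+1); case: (e2 i.+1); case: (e1 c.+1); case: (e2 c).
-
  set r := r2 Z in H.
  have := Hx r i H Hi.
  rewrite !colp_hyb; try (by move: H Hi; clear; move=> *; to_lia; lia).
  rewrite (_ : in_rect Z r i = true); last by move: IZ IB VZ; rewrite /r; clear; move=> *; to_lia; lia.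
  rewrite (_ : in_rect Z r i.+1 = true); last by move: IZ IB VZ; rewrite /r; clear; move=> *; to_lia; lia.
  rewrite (_ : in_rect Z r.+1 i = false); last by apply/negP => I; move: I; rewrite /r; clear; move=> *; to_lia; lia.
  rewrite (_ : in_rect Z r.+1 i.+1 = false); last by apply/negP => I; move: I; rewrite /r; clear; move=> *; to_lia; lia.
  by move: He; case: (e1 i); case: (e2 i); case: (e1 i.+1); case: (e2 i.+1); case: (e1 r); case: (e2 r.+1).
-
  set c := c2 Z in H.
  have := Hx i c Hi H.
  rewrite !colp_hyb; try (by move: H Hi; clear; move=> *; to_lia; lia).
  rewrite (_ : in_rect Z i c = true); last by move: IZ IB VZ; rewrite /c; clear; move=> *; to_lia; lia.
  rewrite (_ : in_rect Z i.+1 c = true); last by move: IZ IB VZ; rewrite /c; clear; move=> *; to_lia; lia.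
  rewrite (_ : in_rect Z i c.+1 = false); last by apply/negP => I; move: I; rewrite /c; clear; move=> *; to_lia; lia.
  rewrite (_ : in_rect Z i.+1 c.+1 = false); last by apply/negP => I; move: I; rewrite /c; clear; move=> *; to_lia; lia.
  by move: He; case: (e1 i); case: (e2 i); case: (e1 i.+1); case: (e2 i.+1); case: (e1 c); case: (e2 c.+1).
Qed.


Definition ef k (f : {ffun 'I_k -> bool}) : nat -> bool :=
  fun i => if i is i'.+1 then (if (insub i' : option 'I_k) is Some o then f o else false) else false.

Lemma not_RTG (N' : finType) (G' : TG bool N') : is_RTG G' -> ~ same_lang G' G0.
Proof.
move=> [HTG Hreg] Hsame.
have [k [Hk Hgr]] := growth (#|N'| * #|{set 'M[option N']_2}|) #|N'|.
pose n := k.+1.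
have Hn : 0 < n by [].
pose gf (f : {ffun 'I_k -> bool}) := fun a b => omap inl (pget (pic n (ef f)) a b) : option (bool + N').
have HT : forall f, T G' (tg_start G') n n (gf f).
  move=> f; apply: TGlang_sound; apply/(Hsame _ _ _).2; exact: pic_in.
pose Good f (kk : (N' * {set 'M[option N']_2} * {ffun N' -> option (box n)})%type) := exists Y om (s : 'M[N']_(n, n)) P, kk = (Y, om, kf s) /\
  [/\ (forall g', T G' Y n n g' -> T G' (tg_start G') n n g'), (Y, om) \in tg_var G', LOC om s,
      strong_hpartition s P &
      (exists y, P y /\ y <> whole n n) /\
      forall y Yl, P y -> label s y = Some Yl -> T G' Yl (r2 y - r1 y).+1 (c2 y - c1 y).+1 (subf (gf f) y)].
have HG : forall f, exists kk, Good f kk.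
  move=> f; have Hne : ~ (n = 1 /\ n = 1).
    by move=> [E _]; move: Hk; rewrite /n in E; case: E => ->.
  have [h1 [w1 [E1 [E2 [Y [om [s [P [H1 H2 H3 H4 H5]]]]]]]]] := first_split (HT f) Hne.
  subst h1 w1; exists (Y, om, kf s), Y, om, s, P; split => //.
pose F : {ffun 'I_k -> bool} -> (N' * {set 'M[option N']_2} * {ffun N' -> option (box n)})%type := fun f => proj1_sig (constructive_indefinite_description _ (HG f)).
have FG : forall f, Good f (F f) := fun f => proj2_sig (constructive_indefinite_description _ (HG f)).
have Ncard : #|{: N' * {set 'M[option N']_2} * {ffun N' -> option (box n)}}| < #|{ffun 'I_k -> bool}|.
  rewrite card_ffun card_bool card_ord !card_prod card_ffun card_option !card_prod card_ord.
  have E4 : n * n * n * n = k.+1 ^ 4 by rewrite /n !expnS expn0 muln1 !mulnA.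
  by rewrite E4; move: Hgr; rewrite addn1.
have Ninj : ~ injective F.
  by move=> Hinj; have := leq_card F Hinj; rewrite leqNgt Ncard.
have [f1 [f2 [Ef Nf]]] : exists f1 f2, F f1 = F f2 /\ f1 <> f2.
  apply: NNPP => H; apply: Ninj => x y Exy; apply: NNPP => Nxy; apply: H; by exists x, y; split.
have [Y1 [om1 [s1 [P1 [Ek1 [Ch1 Hv1 HL1 Hs1 [Hex1 Hc1]]]]]]] := FG f1.
have [Y2 [om2 [s2 [P2 [Ek2 [Ch2 Hv2 HL2 Hs2 [Hex2 Hc2]]]]]]] := FG f2.
rewrite Ef Ek2 in Ek1; case: Ek1 => EY Eom Ekf; subst Y1 om1.
have [Q HQ] := Hreg _ _ Hv1 _ _ s1 HL1.
have Es : s1 = s2 := kf_inj HQ (esym Ekf); subst s2.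
have [o No] : exists o, f1 o != f2 o.
  apply: NNPP => H; apply: Nf; apply/ffunP => x; apply/eqP; apply: NNPP => Hx; apply: H.
  by exists x; apply/negP.
pose Ee := fun a => ef f1 a (+) ef f2 a.
have E0 : Ee 0 = false by [].
have Eo : Ee o.+1 = true by rewrite /Ee /ef valK; move: No; case: (f1 o); case: (f2 o).
have [i [Hio He]] := change_point E0 Eo.
have Hi1 : i.+1 < n by rewrite /n ltnS; apply: leq_trans Hio (ltn_ord o).
have [[HV2 [HC2 HH2]] _] := Hs2.
have Hp2 : part n n P2 by split.
have [Z [[PZ IZ] _]] := HC2 i i.+1 (ltnW Hi1) Hi1.
have P1Z : P1 Z := strong_unique Hs2 Hs1 PZ.
pose hm := hyb n Z (ef f1) (ef f2).
have VZ := HV2 Z PZ.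
have HTh : T G' Y2 n n (fun a b => omap inl (pget hm a b)).
  apply: (Tvar Hv2 HL1 Hs2) => y Yl Py Ly.
  case: (classic (y = Z)) => [Ey|Ny].
    subst y; have HT1 := Hc1 Z Yl P1Z Ly.
    apply: (T_ext HT1) => a b Ha Hb; rewrite /subf /gf.
    have I : in_rect Z (r1 Z + a) (c1 Z + b) by move: VZ Ha Hb; clear; move=> *; to_lia; lia.
    have /andP [Ha' Hb'] := in_rect_valid VZ I.
    by rewrite !(pgetE _ Ha' Hb') !mxE /= I.
  have HT2 := Hc2 y Yl Py Ly.
  have Vy := HV2 y Py.
  apply: (T_ext HT2) => a b Ha Hb; rewrite /subf /gf.
  have I : in_rect y (r1 y + a) (c1 y + b) by move: Vy Ha Hb; clear; move=> *; to_lia; lia.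
  have /andP [Ha' Hb'] := in_rect_valid Vy I.
  have NI : in_rect Z (r1 y + a) (c1 y + b) = false.
    by apply/negP => I'; apply: Ny; apply: (part_disj Hp2 Py PZ I I').
  by rewrite !(pgetE _ Ha' Hb') !mxE /= NI.
have HTS := Ch2 _ HTh.
have Hhm : TGlang G' hm := TGlang_complete Hn Hn HTS.
have Hhm0 : TGlang G0 hm := (Hsame _ _ hm).1 Hhm.
apply: (hyb_contra Hp2 PZ Hex2 Hi1 IZ He).
by move=> a b Ha Hb; apply: G0_xor.
Qed.

Theorem mainTheorem7 :
  (forall (Sig N : finType) (G : TG Sig N), is_RTG G ->
     exists (N' : finType) (G' : TG Sig N'), is_TG G' /\ same_lang G' G) /\
  (exists (Sig N : finType) (G : TG Sig N), is_TG G /\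
     forall (N' : finType) (G' : TG Sig N'), is_RTG G' -> ~ same_lang G' G).
Proof.
split.
  move=> Sig N G [HTG _]; exists N, G; split => // m n p; reflexivity.
exists bool, NT, G0; split; first exact: G0_TG.
move=> N' G' HR; exact: not_RTG HR.
Qed.
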